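(* For every pair of finite sets $W=\{w_1,\dots,w_n\}$, $F=\{f_1,\dots,f_m\}$ (with $n,m\ge 1$), every preference profile $\succcurlyeq$ and every ranking $\bm r$ of $W\cup F$, the matching matrix $\bm M_{\bm r}$ produced by serial dictatorship with ranking $\bm r$ on $\succcurlyeq$ satisfies $irv(\bm M_{\bm r},\succcurlyeq)\le 1/2$.
   Context: Let $\perp$ be the unmatched option; workers have linear-order preferences $\succcurlyeq_{w}$ on $F\cup\{\perp\}$, firms linear-order preferences $\succcurlyeq_f$ on $W\cup\{\perp\}$; $b\succ_a b'$ means $b\ne b'$ and $b\succcurlyeq_a b'$. A matching pairs agents one-to-one across the two sides, each agent being matched to one agent of the other side or unmatched. Its matching matrix $\bm M\in\{0,1\}^{(n+1)\times(m+1)}$ has, for $i\le n,j\le m$, $M_{ij}=1$ iff $w_i$ is matched to $f_j$, $M_{i,m+1}=1$ iff $w_i$ is unmatched, $M_{n+1,j}=1$ iff $f_j$ is unmatched, and $M_{n+1,m+1}=0$. Serial dictatorship with ranking $\bm r=(r_1,\dots,r_{n+m})$ (an ordering of $W\cup F$): for $k=1,\dots,n+m$, if $r_k$ is not yet matched, $r_k$ is assigned its most preferred option among $\perp$ and the not-yet-matched agents of the other side (and that agent, if any, becomes matched with $r_k$). For a profile $\succcurlyeq$ define, for $i\in[n],j\in[m]$, $p_{ij}=\frac1m\big(\mathbb I[f_j\succ_{w_i}\perp]+\sum_{j''=1}^m(\mathbb I[f_j\succ_{w_i}f_{j''}]-\mathbb I[\perp\succ_{w_i}f_{j''}])\big)$,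 $q_{ji}=\frac1n\big(\mathbb I[w_i\succ_{f_j}\perp]+\sum_{i''=1}^n(\mathbb I[w_i\succ_{f_j}w_{i''}]-\mathbb I[\perp\succ_{f_j}w_{i''}])\big)$, and the IR violation $irv(\bm M,\succcurlyeq)=\frac{1}{2n}\sum_{i=1}^n\sum_{j=1}^m M_{ij}\max\{-q_{ji},0\}+\frac{1}{2m}\sum_{i=1}^n\sum_{j=1}^m M_{ij}\max\{-p_{ij},0\}$. *)

(* Defs.v *)
From HB Require Import structures.
From mathcomp Require Import all_boot all_order all_algebra.
Set Implicit Arguments. Unset Strict Implicit. Unset Printing Implicit Defensive.
Import Order.TTheory GRing.Theory Num.Theory.
Local Open Scope ring_scope.

(* Workers are 'I_n, firms are 'I_m; the unmatched option ⊥ is None,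
   so a worker's preference is a relation on option 'I_m ("b ≽ b'"). *)

Definition linear_order (T : Type) (r : rel T) : Prop :=
  [/\ reflexive r, antisymmetric r, transitive r & total r].

Definition spref (T : eqType) (r : rel T) (b b' : T) : bool := (b != b') && r b b'.

Definition cand (T : Type) (avail : pred T) (x : option T) : bool :=
  if x is Some j then avail j else true.

Definition best (T : finType) (pref : rel (option T)) (avail : pred T) : option T :=
  odflt None [pick x : option T | cand avail x && [forall y : option T, cand avail y ==> pref x y]].

Definition agent (n m : nat) := ('I_n + 'I_m)%type.

(* state: for each worker / firm, None = not yet matched (processed),
   Some None = assigned ⊥, Some (Some a) = matched with a *)
Definition sd_state (n m : nat) :=
  (('I_n -> option (option 'I_m)) * ('I_m -> option (option 'I_n)))%type.

Definition sd_step (n m : nat) (prefW : 'I_n -> rel (option 'I_m))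
    (prefF : 'I_m -> rel (option 'I_n)) (s : sd_state n m) (a : agent n m) : sd_state n m :=
  let: (mW, mF) := s in
  match a with
  | inl i =>
      if mW i is None then
        let c := best (prefW i) (fun j => mF j == None) in
        ((fun i' => if i' == i then Some c else mW i'),
         (fun j => if c == Some j then Some (Some i) else mF j))
      else s
  | inr j =>
      if mF j is None then
        let c := best (prefF j) (fun i => mW i == None) in
        ((fun i => if c == Some i then Some (Some j) else mW i),
         (fun j' => if j' == j then Some c else mF j'))
      else s
  end.

Definition serial_dictatorship (n m : nat) (prefW : 'I_n -> rel (option 'I_m))
    (prefF : 'I_m -> rel (option 'I_n)) (r : seq (agent n m)) : sd_state n m :=
  foldl (sd_step prefW prefF) ((fun _ => None), (fun _ => None)) r.

(* matching matrix of size (n+1) x (m+1); index ord_max = the ⊥ row/column *)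
Definition matching_matrix (R : nzRingType) (n m : nat) (s : sd_state n m) : 'M[R]_(n.+1, m.+1) :=
  \matrix_(i < n.+1, j < m.+1)
    match unlift ord_max i, unlift ord_max j with
    | Some i', Some j' => (s.1 i' == Some (Some j'))%:R
    | Some i', None => (~~ [exists j' : 'I_m, s.1 i' == Some (Some j')])%:R
    | None, Some j' => (~~ [exists i' : 'I_n, s.2 j' == Some (Some i')])%:R
    | None, None => 0
    end.

Definition pW (R : numFieldType) (n m : nat) (prefW : 'I_n -> rel (option 'I_m))
    (i : 'I_n) (j : 'I_m) : R :=
  m%:R^-1 * ((spref (prefW i) (Some j) None)%:R
    + \sum_(j'' < m) ((spref (prefW i) (Some j) (Some j''))%:R
                      - (spref (prefW i) None (Some j''))%:R)).

Definition qF (R : numFieldType) (n m : nat) (prefF : 'I_m -> rel (option 'I_n))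
    (j : 'I_m) (i : 'I_n) : R :=
  n%:R^-1 * ((spref (prefF j) (Some i) None)%:R
    + \sum_(i'' < n) ((spref (prefF j) (Some i) (Some i''))%:R
                      - (spref (prefF j) None (Some i''))%:R)).

Definition irv (R : realFieldType) (n m : nat) (M : 'M[R]_(n.+1, m.+1))
    (prefW : 'I_n -> rel (option 'I_m)) (prefF : 'I_m -> rel (option 'I_n)) : R :=
  (2 * n%:R)^-1 * \sum_(i < n) \sum_(j < m)
      M (lift ord_max i) (lift ord_max j) * Num.max (- qF R prefF j i) 0
  + (2 * m%:R)^-1 * \sum_(i < n) \sum_(j < m)
      M (lift ord_max i) (lift ord_max j) * Num.max (- pW R prefW i j) 0.

(* Main.v *)
Require Import Defs.
From HB Require Import structures.
From mathcomp Require Import all_boot all_order all_algebra.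
From mathcomp Require Import lra.
Import Order.TTheory GRing.Theory Num.Theory.
Local Open Scope ring_scope.
Lemma best_some (T : finType) (pref : rel (option T)) (avail : pred T) j :
  best pref avail = Some j -> avail j && pref (Some j) None.
Proof.
rewrite /best; case: pickP => [x /andP[Hc /forallP Hf]|_] //= Hx.
subst x; rewrite /= in Hc; rewrite Hc /=; exact: (implyP (Hf None)).
Qed.

Section Inv.
Variables (n m : nat) (prefW : 'I_n -> rel (option 'I_m)) (prefF : 'I_m -> rel (option 'I_n)).

Definition Inv (s : sd_state n m) : Prop :=
  (forall i j, s.1 i = Some (Some j) -> s.2 j = Some (Some i)) /\
  (forall i j, s.1 i = Some (Some j) ->
     spref (prefW i) (Some j) None || spref (prefF j) (Some i) None).

Lemma Inv_step s a : Inv s -> Inv (sd_step prefW prefF s a).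
Proof.
case: s => mW mF [I1 I2]; case: a => [i0|j0] /=.
- case E: (mW i0) => [x|]; first by split.
  set c := best (prefW i0) (fun j => mF j == None).
  have Hc := @best_some _ (prefW i0) (fun j => mF j == None).
  split => i j /=.
  + case: eqP => [-> [<-]|Hi]; first by rewrite eqxx.
    move=> H; have := I1 _ _ H; case: eqP => // Hcj Hm.
    by move/andP: (Hc j Hcj) => [/eqP H0 _]; rewrite /= H0 in Hm.
  + case: eqP => [-> [Hcj]|Hi]; last exact: I2.
    by move: (Hc j Hcj) => /andP[_ H0]; rewrite /spref H0.
- case E: (mF j0) => [x|]; first by split.
  set c := best (prefF j0) (fun i => mW i == None).
  have Hc := @best_some _ (prefF j0) (fun i => mW i == None).
  split => i j /=.
  + case: eqP => [Hci [<-]|Hi]; first by rewrite eqxx Hci.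
    move=> H; have := I1 _ _ H; case: eqP => // Hj; rewrite -Hj in E; by rewrite /= E.
  + case: eqP => [Hci [<-]|Hi]; last exact: I2.
    by move: (Hc i Hci) => /andP[_ H0]; rewrite /spref H0 orbT.
Qed.

Lemma Inv_sd r : Inv (serial_dictatorship prefW prefF r).
Proof.
rewrite /serial_dictatorship.
have: Inv ((fun _ => None), (fun _ => None)) by split.
elim: r ((fun _ => None), (fun _ => None)) => [|a r IH] s Hs //=.
exact/IH/Inv_step.
Qed.
End Inv.
Lemma pW_ge0 (R : realFieldType) n m (prefW : 'I_n -> rel (option 'I_m)) i j :
  linear_order (prefW i) -> spref (prefW i) (Some j) None -> 0 <= pW R prefW i j.
Proof.
case=> _ Ha Ht _ Hs; rewrite /pW Hs mulr_ge0 ?invr_ge0 ?ler0n //.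
apply: addr_ge0 => //; apply: sumr_ge0 => j'' _; rewrite subr_ge0.
have: spref (prefW i) None (Some j'') ==> spref (prefW i) (Some j) (Some j'').
  apply/implyP; move: Hs; rewrite /spref => /andP[_ H1] /andP[_ H2].
  rewrite (Ht _ _ _ H1 H2) andbT; apply/eqP => -[E]; subst j''.
  by have := Ha _ _ (introT andP (conj H1 H2)).
by case: (spref _ None _); case: (spref _ (Some j) _).
Qed.

Lemma pW_gem1 (R : realFieldType) n m (prefW : 'I_n -> rel (option 'I_m)) i j :
  (0 < m)%N -> -1 <= pW R prefW i j.
Proof.
move=> hm; rewrite /pW.
have H : - (m%:R) <= ((spref (prefW i) (Some j) None)%:R
    + \sum_(j'' < m) ((spref (prefW i) (Some j) (Some j''))%:R
                      - (spref (prefW i) None (Some j''))%:R) : R).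
  have E : \sum_(j''<m) (-1:R) = - m%:R by rewrite sumr_const card_ord -mulNrn.
  rewrite -E -[X in X <= _]add0r; apply: lerD; first by rewrite ler0n.
  by apply: ler_sum => j'' _; case: (spref _ None _); case: (spref _ (Some j) _); rewrite /=; lra.
have := ler_wpM2l (x := (m%:R : R)^-1) _ H.
rewrite invr_ge0 ler0n mulrN mulVf ?pnatr_eq0 -?lt0n //; by apply.
Qed.
Lemma max0_facts (R : realFieldType) (x : R) :
  0 <= Num.max x 0 /\ x <= Num.max x 0 /\ (Num.max x 0 = x \/ Num.max x 0 = 0).
Proof.
split; first by rewrite le_max lexx orbT. split; first by rewrite le_max lexx.
by case: (leP x 0) => h; [right|left]. Qed.


Theorem proposition2 (R : realFieldType) (n m : nat) (hn : (1 <= n)%N) (hm : (1 <= m)%N)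
    (prefW : 'I_n -> rel (option 'I_m)) (prefF : 'I_m -> rel (option 'I_n))
    (hW : forall i, linear_order (prefW i)) (hF : forall j, linear_order (prefF j))
    (r : seq (agent n m)) (hr_uniq : uniq r) (hr_all : forall a : agent n m, a \in r) :
  irv (matching_matrix R (serial_dictatorship prefW prefF r)) prefW prefF <= 1 / 2.
Proof.
set s := serial_dictatorship prefW prefF r.
have [I1 I2] := @Inv_sd _ _ prefW prefF r; rewrite -/s in I1 I2.
set Mv := fun i j => ((s.1 i == Some (Some j))%:R : R).
have HM i j : matching_matrix R s (lift ord_max i) (lift ord_max j) = Mv i j.
  by rewrite mxE !liftK.
set a := (2 * n%:R)^-1 : R; set b := (2 * m%:R)^-1 : R.
set X := fun i j => Num.max (- qF R prefF j i) 0.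
set Y := fun i j => Num.max (- pW R prefW i j) 0.
set c := Num.max a b.
have E : irv (matching_matrix R s) prefW prefF =
   \sum_i \sum_j (a * (Mv i j * X i j) + b * (Mv i j * Y i j)).
  rewrite /irv; under [RHS]eq_bigr do rewrite big_split /= -!mulr_sumr.
  rewrite big_split /= -!mulr_sumr; congr (_ * _ + _ * _);
  apply: eq_bigr => i _; apply: eq_bigr => j _; by rewrite HM.
have ha : 0 <= a by rewrite /a invr_ge0 mulr_ge0 ?ler0n.
have hb : 0 <= b by rewrite /b invr_ge0 mulr_ge0 ?ler0n.
have hca : a <= c by rewrite /c le_max lexx.
have hcb : b <= c by rewrite /c le_max lexx orbT.
have term i j : a * (Mv i j * X i j) + b * (Mv i j * Y i j) <= Mv i j * c.
  have [X0 [X1 X2]] := @max0_facts R (- qF R prefF j i).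
  have [Y0 [Y1 Y2]] := @max0_facts R (- pW R prefW i j).
  have hq : -1 <= qF R prefF j i := @pW_gem1 R _ _ prefF j i hn.
  have hp := @pW_gem1 R _ _ prefW i j hm.
  rewrite /Mv; case H: (s.1 i == Some (Some j)); last by rewrite !mul0r !mulr0 addr0.
  rewrite !mul1r; rewrite -/(X i j) -/(Y i j) in X0 X1 X2 Y0 Y1 Y2.
  have hX1 : X i j <= 1 by case: X2 => ->; lra.
  have hY1 : Y i j <= 1 by case: Y2 => ->; lra.
  case/orP: (I2 _ _ (eqP H)) => Hs.
  - have := @pW_ge0 R _ _ prefW i j (hW i) Hs => h0.
    have -> : Y i j = 0 by case: Y2 => // HY; lra.
    rewrite mulr0 addr0; apply: le_trans hca; exact: ler_piMr.
  - have h0 : 0 <= qF R prefF j i := @pW_ge0 R _ _ prefF j i (hF j) Hs.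
    have -> : X i j = 0 by case: X2 => // HX; lra.
    rewrite mulr0 add0r; apply: le_trans hcb; exact: ler_piMr.
rewrite E.
apply: (le_trans (ler_sum _ (fun i _ => ler_sum _ (fun j _ => term i j)))).
under eq_bigr do rewrite -mulr_suml; rewrite -mulr_suml.
have row i : \sum_j Mv i j <= 1.
  rewrite /Mv; case Es: (s.1 i) => [[j0|]|]; last 2 first.
  - by rewrite big1 ?ler01.
  - by rewrite big1 ?ler01.
  rewrite (bigD1 j0) //= eqxx big1 ?addr0 // => j Hj.
  case: eqP => // -[] E0; by rewrite E0 eqxx in Hj.
have col j : \sum_i Mv i j <= 1.
  rewrite /Mv; case: (pickP (fun i => s.1 i == Some (Some j))) => [i0 Hi0|H0]; last first.
    by rewrite big1 ?ler01 // => i _; rewrite H0.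
  rewrite (bigD1 i0) //= Hi0 big1 ?addr0 // => i Hi.
  case: eqP => // Hs; have := I1 _ _ Hs; rewrite (I1 _ _ (eqP Hi0)) => -[] Ei.
  by rewrite Ei eqxx in Hi.
have N0 : 0 <= \sum_i \sum_j Mv i j by apply: sumr_ge0 => i _; apply: sumr_ge0 => j _; rewrite ler0n.
have Nn : \sum_i \sum_j Mv i j <= n%:R.
  apply: le_trans (ler_sum _ (fun i _ => row i)) _; by rewrite sumr_const card_ord.
have Nm : \sum_i \sum_j Mv i j <= m%:R.
  rewrite exchange_big; apply: le_trans (ler_sum _ (fun j _ => col j)) _; by rewrite sumr_const card_ord.
have Ha : n%:R * a = 1 / 2.
  rewrite /a mul1r invfM mulrCA mulfV ?mulr1 // pnatr_eq0 -lt0n //.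
have Hb : m%:R * b = 1 / 2.
  rewrite /b mul1r invfM mulrCA mulfV ?mulr1 // pnatr_eq0 -lt0n //.
have Hc : c = a \/ c = b.
  rewrite /c; case: (leP a b) => h; by [right|left].
case: Hc => ->.
- by rewrite -Ha; apply: ler_wpM2r.
- by rewrite -Hb; apply: ler_wpM2r.
Qed.
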